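(* Let $(L,\preceq)$ be a lattice and $\delta$ a local congruence on $L$, and let $[x]_\delta,[y]_\delta\in L/\delta$. Suppose there exists a single class $[c]_\delta\in L/\delta$ such that $[x]_\delta\preceq_\delta[c]_\delta\preceq_\delta[y]_\delta$ and $[y]_\delta\preceq_\delta[c]_\delta\preceq_\delta[x]_\delta$, satisfying $x_1\preceq c_1\preceq y_1$ and $y_2\preceq c_2\preceq x_2$ for some $x_1,x_2\in[x]_\delta$, $c_1,c_2\in[c]_\delta$ and $y_1,y_2\in[y]_\delta$. Then $[x]_\delta=[y]_\delta$.
   Context: For an equivalence relation $\delta$ on $L$, $[a]_\delta$ is the class of $a$ and $L/\delta$ the set of classes. A local congruence on a lattice $(L,\preceq)$ is an equivalence relation each of whose classes is a sublattice of $L$ and is convex (if $u,v$ are in the class and $u\preceq w\preceq v$, then $w$ is in the class). A $\delta$-sequence from $p_0$ to $p_n$ is a finite sequence $(p_0,p_1,\dots,p_n)$ of elements of $L$ with $n\ge1$ such that for each $i\in\{1,\dots,n\}$ either $(p_{i-1},p_i)\in\delta$ or $p_{i-1}\preceq p_i$. The relation $\preceq_\delta$ on $L/\delta$ is defined by $[x]_\delta\preceq_\delta[y]_\delta$ iff there exists a $\delta$-sequence from some $x'\in[x]_\delta$ to some $y'\in[y]_\delta$. *)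

(* Defs.v *)
From HB Require Import structures.
From mathcomp Require Import all_boot all_order.
Set Implicit Arguments. Unset Strict Implicit. Unset Printing Implicit Defensive.
Import Order.TTheory.
Local Open Scope order_scope.

Definition relL (T : Type) := T -> T -> Prop.

Definition cls (T : Type) (delta : relL T) (a : T) : T -> Prop :=
  fun b => delta a b.

Definition local_congruence (disp : Order.disp_t) (L : latticeType disp)
    (delta : relL L) : Prop :=
  [/\ (forall a, delta a a),
      (forall a b, delta a b -> delta b a),
      (forall a b c, delta a b -> delta b c -> delta a c),
      (forall a u v, delta a u -> delta a v -> delta a (u `&` v) /\ delta a (u `|` v)) &
      (forall a u v w, delta a u -> delta a v -> u <= w -> w <= v -> delta a w)].

Fixpoint dchain (disp : Order.disp_t) (L : latticeType disp) (delta : relL L)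
    (p : L) (s : seq L) : Prop :=
  match s with
  | [::] => True
  | q :: s' => (delta p q \/ p <= q) /\ dchain delta q s'
  end.

Definition delta_seq (disp : Order.disp_t) (L : latticeType disp) (delta : relL L)
    (a b : L) : Prop :=
  exists s : seq L, s <> [::] /\ dchain delta a s /\ last a s = b.

Definition cls_le (disp : Order.disp_t) (L : latticeType disp) (delta : relL L)
    (x y : L) : Prop :=
  exists x' y', cls delta x x' /\ cls delta y y' /\ delta_seq delta x' y'.

(* Main.v *)
Require Import Defs.
From HB Require Import structures.
From mathcomp Require Import all_boot all_order.
From Stdlib Require Import FunctionalExtensionality PropExtensionality.
Import Order.TTheory.
Local Open Scope order_scope.

Theorem proposition4p5 (disp : Order.disp_t) (L : latticeType disp)
    (delta : relL L) (x y : L) :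
  local_congruence delta ->
  (exists c : L,
      cls_le delta x c /\ cls_le delta c y /\
      cls_le delta y c /\ cls_le delta c x /\
      exists x1 x2 c1 c2 y1 y2 : L,
        (cls delta x x1 /\ cls delta x x2 /\ cls delta c c1 /\ cls delta c c2 /\
         cls delta y y1 /\ cls delta y y2) /\
        (x1 <= c1 /\ c1 <= y1 /\ y2 <= c2 /\ c2 <= x2)) ->
  cls delta x = cls delta y.
Proof.
move=> [Hr Hs Ht Hl Hc] [c [_ [_ [_ [_ [x1 [x2 [c1 [c2 [y1 [y2
  [[hx1 [hx2 [hc1 [hc2 [hy1 hy2]]]]] [l1 [l2 [l3 l4]]]]]]]]]]]]]]].
rewrite /cls in hx1 hx2 hc1 hc2 hy1 hy2.
have hxc : delta x c.
  have A : delta c (c1 `&` x2).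
    apply: (Hc c (c1 `&` c2) c1) => //; first exact: (Hl _ _ _ hc1 hc2).1.
      by rewrite leI2 ?lexx.
    exact: leIl.
  have B : delta x (c1 `&` x2).
    apply: (Hc x (x1 `&` x2) x2) => //; first exact: (Hl _ _ _ hx1 hx2).1.
      by rewrite leI2 ?lexx.
    exact: leIr.
  exact: Ht B (Hs _ _ A).
have hcy : delta c y.
  have A : delta c (c2 `&` y1).
    apply: (Hc c (c1 `&` c2) c2) => //; first exact: (Hl _ _ _ hc1 hc2).1.
      by rewrite meetC leI2 ?lexx.
    exact: leIl.
  have B : delta y (c2 `&` y1).
    apply: (Hc y (y1 `&` y2) y1) => //; first exact: (Hl _ _ _ hy1 hy2).1.
      by rewrite meetC leI2 ?lexx.
    exact: leIr.
  exact: Ht A (Hs _ _ B).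
have hxy := Ht _ _ _ hxc hcy.
apply: functional_extensionality => b; apply: propositional_extensionality.
rewrite /cls; split => h; [exact: Ht (Hs _ _ hxy) h | exact: Ht hxy h].
Qed.
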